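(* Let $I$ be a non-empty upward directed (pre)ordered set. The following statements are equivalent: (1) $I$ has a maximal element, or $I$ contains a countable cofinal sequence. (2) Every surjective $I$-inverse system $\{X_\alpha, f_{\alpha\beta}\}$ of non-empty sets has a non-empty inverse limit. (3) For every morphism $\mathbf g=(g_\alpha)_{\alpha\in I}:\{E_\alpha,\epsilon_{\alpha\beta}\}\to\{S_\alpha,\sigma_{\alpha\beta}\}$ of $I$-inverse systems of sets such that every $g_\alpha$ is surjective, every $\epsilon_{\alpha\beta}$ is surjective and every $\sigma_{\alpha\beta}$ is injective, the induced map $\varprojlim \mathbf g:\varprojlim E_\alpha\to\varprojlim S_\alpha$ is surjective. (4) Every $I$-inverse system of non-empty sets $\{X_\alpha, f_{\alpha\beta}\}$ satisfying the Mittag-Leffler condition has a non-empty inverse limit. (5) For every group $G$, every surjective $I$-inverse system of non-empty transitive $G$-sets (with $G$-equivariant transition maps) has a non-empty inverse limit.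
   Context: An $I$-inverse system $\{X_\alpha, f_{\alpha\beta}:X_\beta\to X_\alpha \mid \alpha\le\beta\in I\}$ consists of objects $X_\alpha$ and maps $f_{\alpha\beta}$ for $\alpha\le\beta$ with $f_{\alpha\alpha}=\mathrm{id}$ and $f_{\alpha\beta}f_{\beta\gamma}=f_{\alpha\gamma}$ for $\alpha\le\beta\le\gamma$. It is called surjective if all $f_{\alpha\beta}$ are surjective. It satisfies the Mittag-Leffler (ML) condition if for every $i\in I$ there is $j\ge i$ such that $f_{ik}(X_k)=f_{ij}(X_j)$ for all $k\ge j$. A $G$-set is a non-empty set with an action of the group $G$; it is transitive if for all $x_1,x_2$ there is $g\in G$ with $gx_1=x_2$. *)

(* Defs.v *)
Definition directed_preorder {I : Type} (le : I -> I -> Prop) : Prop :=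
  (forall a, le a a) /\
  (forall a b c, le a b -> le b c -> le a c) /\
  (forall a b, exists c, le a c /\ le b c).

Definition is_maximal {I : Type} (le : I -> I -> Prop) (m : I) : Prop :=
  forall x, le m x -> le x m.

(** A countable cofinal sequence (a sequence indexed by nat; finite
    sequences are covered by repetition). *)
Definition has_countable_cofinal_seq {I : Type} (le : I -> I -> Prop) : Prop :=
  exists s : nat -> I, forall i, exists n, le i (s n).

(** An I-inverse system: maps f a b (for a <= b) from X b to X a,
    with f a a = id and f a b o f b c = f a c.  The maps take the proof
    of a <= b as argument; the axioms hold for all such proofs. *)
Definition is_inverse_system {I : Type} (le : I -> I -> Prop)
  (X : I -> Type) (f : forall a b, le a b -> X b -> X a) : Prop :=
  (forall a (h : le a a) x, f a a h x = x) /\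
  (forall a b c (hab : le a b) (hbc : le b c) (hac : le a c) x,
      f a b hab (f b c hbc x) = f a c hac x).

Definition in_inv_limit {I : Type} (le : I -> I -> Prop)
  (X : I -> Type) (f : forall a b, le a b -> X b -> X a)
  (x : forall a, X a) : Prop :=
  forall a b (h : le a b), f a b h (x b) = x a.

Definition inv_limit_nonempty {I : Type} (le : I -> I -> Prop)
  (X : I -> Type) (f : forall a b, le a b -> X b -> X a) : Prop :=
  exists x : forall a, X a, in_inv_limit le X f x.

Definition surjective_system {I : Type} (le : I -> I -> Prop)
  (X : I -> Type) (f : forall a b, le a b -> X b -> X a) : Prop :=
  forall a b (h : le a b) (y : X a), exists x : X b, f a b h x = y.

Definition injective_system {I : Type} (le : I -> I -> Prop)
  (X : I -> Type) (f : forall a b, le a b -> X b -> X a) : Prop :=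
  forall a b (h : le a b) (x y : X b), f a b h x = f a b h y -> x = y.

Definition mittag_leffler {I : Type} (le : I -> I -> Prop)
  (X : I -> Type) (f : forall a b, le a b -> X b -> X a) : Prop :=
  forall i, exists j (hij : le i j),
    forall k (hjk : le j k) (hik : le i k) (y : X i),
      (exists x : X k, f i k hik x = y) <-> (exists x : X j, f i j hij x = y).

Record Group := {
  gcar :> Type;
  gmul : gcar -> gcar -> gcar;
  gone : gcar;
  ginv : gcar -> gcar;
  gmulA : forall x y z, gmul x (gmul y z) = gmul (gmul x y) z;
  gmul1l : forall x, gmul gone x = x;
  gmulVl : forall x, gmul (ginv x) x = gone
}.

Definition is_action (G : Group) (Y : Type) (act : G -> Y -> Y) : Prop :=
  (forall y, act (gone G) y = y) /\
  (forall g h y, act (gmul G g h) y = act g (act h y)).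

Definition transitive_action (G : Group) (Y : Type) (act : G -> Y -> Y) : Prop :=
  forall y1 y2, exists g, act g y1 = y2.

Definition cond1 {I : Type} (le : I -> I -> Prop) : Prop :=
  (exists m, is_maximal le m) \/ has_countable_cofinal_seq le.

Definition cond2 {I : Type} (le : I -> I -> Prop) : Prop :=
  forall (X : I -> Type) (f : forall a b, le a b -> X b -> X a),
    is_inverse_system le X f ->
    surjective_system le X f ->
    (forall a, inhabited (X a)) ->
    inv_limit_nonempty le X f.

Definition cond3 {I : Type} (le : I -> I -> Prop) : Prop :=
  forall (E : I -> Type) (eps : forall a b, le a b -> E b -> E a)
         (S : I -> Type) (sig : forall a b, le a b -> S b -> S a)
         (g : forall a, E a -> S a),
    is_inverse_system le E eps ->
    is_inverse_system le S sig ->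
    (forall a b (h : le a b) x, g a (eps a b h x) = sig a b h (g b x)) ->
    (forall a (s : S a), exists e : E a, g a e = s) ->
    surjective_system le E eps ->
    injective_system le S sig ->
    forall s : forall a, S a, in_inv_limit le S sig s ->
      exists e : forall a, E a, in_inv_limit le E eps e /\
        (forall a, g a (e a) = s a).

Definition cond4 {I : Type} (le : I -> I -> Prop) : Prop :=
  forall (X : I -> Type) (f : forall a b, le a b -> X b -> X a),
    is_inverse_system le X f ->
    (forall a, inhabited (X a)) ->
    mittag_leffler le X f ->
    inv_limit_nonempty le X f.

Definition cond5 {I : Type} (le : I -> I -> Prop) : Prop :=
  forall (G : Group) (X : I -> Type) (f : forall a b, le a b -> X b -> X a)
         (act : forall a, G -> X a -> X a),
    is_inverse_system le X f ->
    surjective_system le X f ->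
    (forall a, inhabited (X a)) ->
    (forall a, is_action G (X a) (act a)) ->
    (forall a, transitive_action G (X a) (act a)) ->
    (forall a b (h : le a b) (g : G) x, f a b h (act b g x) = act a g (f a b h x)) ->
    inv_limit_nonempty le X f.

(* Main.v *)
Require Import Defs.
From Stdlib Require Import Classical ClassicalEpsilon FunctionalExtensionality ProofIrrelevance List Arith Lia.


Definition tseq {I : Type} (le : I -> I -> Prop)
  (dir : forall a b, exists c, le a c /\ le b c) (s : nat -> I) : nat -> I :=
  fix t n := match n with
  | 0 => s 0
  | S n => proj1_sig (constructive_indefinite_description _ (dir (t n) (s (S n))))
  end.

Lemma tseq_step {I : Type} (le : I -> I -> Prop) dir s n :
  le (tseq le dir s n) (tseq le dir s (S n)) /\ le (s (S n)) (tseq le dir s (S n)).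
Proof.
  simpl. destruct (constructive_indefinite_description _ _) as [c [h1 h2]]. simpl. auto.
Qed.

Lemma tseq_mono {I : Type} (le : I -> I -> Prop) dir s
  (refl : forall a, le a a) (trans : forall a b c, le a b -> le b c -> le a c) n m :
  n <= m -> le (tseq le dir s n) (tseq le dir s m).
Proof.
  induction 1. apply refl. eapply trans; [exact IHle| apply tseq_step].
Qed.

Lemma tseq_cof {I : Type} (le : I -> I -> Prop) dir s
  (refl : forall a, le a a) n : le (s n) (tseq le dir s n).
Proof. destruct n. apply refl. apply tseq_step. Qed.

Definition xseq {I : Type} (le : I -> I -> Prop) dir s (X : I -> Type)
  (f : forall a b, le a b -> X b -> X a)
  (surj : surjective_system le X f) (x0 : X (tseq le dir s 0)) :
  forall n, X (tseq le dir s n) :=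
  fix xs n := match n as n0 return X (tseq le dir s n0) with
  | 0 => x0
  | S n => proj1_sig (constructive_indefinite_description _
             (surj _ _ (proj1 (tseq_step le dir s n)) (xs n)))
  end.

Lemma xseq_step {I : Type} (le : I -> I -> Prop) dir s X f surj x0 n h :
  f _ _ h (xseq le dir s X f surj x0 (S n)) = xseq le dir s X f surj x0 n.
Proof.
  cbn [xseq]. destruct (constructive_indefinite_description (fun x : X _ => _) _) as [c hc]. simpl.
  rewrite (proof_irrelevance _ h (proj1 (tseq_step le dir s n))). exact hc.
Qed.

Lemma xseq_compat {I : Type} (le : I -> I -> Prop) dir s X f surj x0
  (refl : forall a, le a a) (trans : forall a b c, le a b -> le b c -> le a c)
  (Hinv : is_inverse_system le X f) n m :
  n <= m -> forall h, f _ _ h (xseq le dir s X f surj x0 m) = xseq le dir s X f surj x0 n.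
Proof.
  destruct Hinv as [H1 H2].
  induction 1; intros h.
  - apply H1.
  - rewrite <- (H2 _ _ _ (tseq_mono le dir s refl trans n m H) (proj1 (tseq_step le dir s m)) h).
    rewrite xseq_step. apply IHle.
Qed.

Lemma cofseq_of_cond1 {I : Type} (le : I -> I -> Prop) (Hdir : directed_preorder le) :
  cond1 le -> has_countable_cofinal_seq le.
Proof.
  destruct Hdir as [refl [trans dir]].
  intros [[m Hm]|H]; [|exact H].
  exists (fun _ => m). intros i. exists 0.
  destruct (dir i m) as [c [h1 h2]]. eapply trans; [exact h1|]. apply Hm, h2.
Qed.

Lemma c1_c2 (I : Type) (le : I -> I -> Prop) (Hdir : directed_preorder le) :
  cond1 le -> cond2 le.
Proof.
  intros H1. apply cofseq_of_cond1 in H1; [|exact Hdir].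
  destruct H1 as [s Hs].
  pose proof Hdir as [refl [trans dir]].
  intros X f Hinv surj Hinh.
  destruct (Hinh (tseq le dir s 0)) as [x0].
  set (xs := xseq le dir s X f surj x0).
  assert (cof : forall a, exists n, le a (tseq le dir s n)).
  { intros a. destruct (Hs a) as [n hn]. exists n. eapply trans; [exact hn|]. apply tseq_cof, refl. }
  set (nn := fun a => proj1_sig (constructive_indefinite_description _ (cof a))).
  assert (hnn : forall a, le a (tseq le dir s (nn a))).
  { intros a. unfold nn. destruct (constructive_indefinite_description _ _). simpl. auto. }
  exists (fun a => f _ _ (hnn a) (xs (nn a))).
  intros a b h.
  destruct Hinv as [Hi1 Hi2].
  assert (key : forall a n (ha : le a (tseq le dir s n)) m (hm : n <= m) (ha' : le a (tseq le dir s m)),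
     f _ _ ha (xs n) = f _ _ ha' (xs m)).
  { intros a0 n ha m hm ha'. unfold xs.
    rewrite <- (xseq_compat le dir s X f surj x0 refl trans (conj Hi1 Hi2) n m hm (tseq_mono le dir s refl trans n m hm)).
    apply Hi2. }
  rewrite Hi2 with (hac := trans _ _ _ h (hnn b)).
  destruct (le_ge_dec (nn a) (nn b)) as [hab|hab].
  - symmetry. apply key. exact hab.
  - apply key. lia.
Qed.

Lemma c2_c3 (I : Type) (le : I -> I -> Prop) : cond2 le -> cond3 le.
Proof.
  intros H2 E eps S sig g HE HS Hg Hgs Hsurj Hinj s Hs.
  set (F := fun a => {e : E a | g a e = s a}).
  assert (Fp : forall a b (h : le a b) (e : F b), g a (eps a b h (proj1_sig e)) = s a).
  { intros a b h [e he]. simpl. rewrite Hg, he. apply Hs. }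
  set (fF := fun a b h (e : F b) => exist (fun x => g a x = s a) (eps a b h (proj1_sig e)) (Fp a b h e) : F a).
  destruct (H2 F fF) as [x Hx].
  - destruct HE as [E1 E2]. split.
    + intros a h [e he]. unfold fF. simpl. apply eq_sig_hprop. intros; apply proof_irrelevance.
      simpl. apply E1.
    + intros a b c hab hbc hac [e he]. unfold fF. apply eq_sig_hprop. intros; apply proof_irrelevance.
      simpl. apply E2.
  - intros a b h [e he]. destruct (Hsurj a b h e) as [e' he'].
    assert (hg : g b e' = s b).
    { apply (Hinj a b h). rewrite <- Hg, he', he. symmetry. apply Hs. }
    exists (exist _ e' hg). unfold fF. apply eq_sig_hprop. intros; apply proof_irrelevance. simpl. exact he'.
  - intros a. destruct (Hgs a (s a)) as [e he]. exact (inhabits (exist _ e he)).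
  - exists (fun a => proj1_sig (x a)). split.
    + intros a b h. rewrite <- (Hx a b h). reflexivity.
    + intros a. exact (proj2_sig (x a)).
Qed.

Lemma c3_c2 (I : Type) (le : I -> I -> Prop) : cond3 le -> cond2 le.
Proof.
  intros H3 X f Hinv Hsurj Hinh.
  edestruct (H3 X f (fun _ : I => unit) (fun a b (_ : le a b) (_ : unit) => tt) (fun a (_ : X a) => tt) Hinv)
    with (s := fun _ : I => tt) as [e [He _]].
  - split; intros; destruct x; reflexivity.
  - reflexivity.
  - intros a []. destruct (Hinh a) as [x]. exists x. reflexivity.
  - exact Hsurj.
  - intros a b h [] [] _. reflexivity.
  - intros a b h. reflexivity.
  - exists e. exact He.
Qed.

Lemma c2_c5 (I : Type) (le : I -> I -> Prop) : cond2 le -> cond5 le.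
Proof.
  intros H2 G X f act Hinv Hs Hinh _ _ _. apply H2; assumption.
Qed.

Lemma c4_c2 (I : Type) (le : I -> I -> Prop) (Hdir : directed_preorder le) : cond4 le -> cond2 le.
Proof.
  destruct Hdir as [refl _].
  intros H4 X f Hinv Hsurj Hinh. apply H4; auto.
  intros i. exists i, (refl i). intros k hjk hik y. split; intros _.
  - apply Hsurj.
  - apply Hsurj.
Qed.

Lemma c2_c4 (I : Type) (le : I -> I -> Prop) (Hdir : directed_preorder le) : cond2 le -> cond4 le.
Proof.
  pose proof Hdir as [refl [trans dir]].
  intros H2 X f Hinv Hinh HML.
  destruct Hinv as [Hi1 Hi2].
  set (stab := fun a (y : X a) => forall k (h : le a k), exists x : X k, f a k h x = y).
  assert (Sres : forall a b (h : le a b) (y : X b), stab b y -> stab a (f a b h y)).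
  { intros a b h y hy k hk. destruct (dir k b) as [l [hkl hbl]].
    destruct (hy l hbl) as [x hx]. exists (f k l hkl x).
    rewrite Hi2 with (hac := trans _ _ _ hk hkl). rewrite <- hx.
    symmetry. apply Hi2. }
  assert (Sml : forall b j (hbj : le b j),
     (forall k (hjk : le j k) (hik : le b k) (y : X b),
      (exists x : X k, f b k hik x = y) <-> (exists x : X j, f b j hbj x = y)) ->
     forall y, (exists x : X j, f b j hbj x = y) -> stab b y).
  { intros b j hbj Hj y hy k hk. destruct (dir k j) as [m [hkm hjm]].
    destruct (proj2 (Hj m hjm (trans _ _ _ hk hkm) y) hy) as [w hw].
    exists (f k m hkm w). rewrite Hi2 with (hac := trans _ _ _ hk hkm). exact hw. }
  set (Y := fun a => {y : X a | stab a y}).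
  set (fY := fun a b h (y : Y b) => exist (stab a) (f a b h (proj1_sig y)) (Sres a b h _ (proj2_sig y)) : Y a).
  destruct (H2 Y fY) as [x Hx].
  - split.
    + intros a h [y hy]. apply eq_sig_hprop. intros; apply proof_irrelevance. apply Hi1.
    + intros a b c hab hbc hac [y hy]. apply eq_sig_hprop. intros; apply proof_irrelevance. apply Hi2.
  - intros a b h [y hy].
    destruct (HML b) as [j [hbj Hj]].
    destruct (hy j (trans _ _ _ h hbj)) as [z hz].
    assert (st : stab b (f b j hbj z)).
    { apply (Sml b j hbj Hj). exists z. reflexivity. }
    exists (exist _ _ st). apply eq_sig_hprop. intros; apply proof_irrelevance. simpl.
    rewrite Hi2 with (hac := trans _ _ _ h hbj). exact hz.
  - intros a. destruct (HML a) as [j [haj Hj]]. destruct (Hinh j) as [z].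
    assert (st : stab a (f a j haj z)).
    { apply (Sml a j haj Hj). exists z. reflexivity. }
    exact (inhabits (exist _ _ st)).
  - exists (fun a => proj1_sig (x a)). intros a b h. rewrite <- (Hx a b h). reflexivity.
Qed.

Fixpoint trunc {I : Type} (le : I -> I -> Prop) (a : I) (l : list I) : list I :=
  match l with
  | nil => nil
  | x :: l' => if excluded_middle_informative (le a x) then x :: nil else x :: trunc le a l'
  end.

Fixpoint good {I : Type} (le : I -> I -> Prop) (a : I) (l : list I) : Prop :=
  match l with
  | nil => False
  | x :: l' => (le a x /\ l' = nil) \/ (~ le a x /\ good le a l')
  end.

Lemma trunc_good {I : Type} (le : I -> I -> Prop) a l :
  (exists x, In x l /\ le a x) -> good le a (trunc le a l).
Proof.
  induction l as [|x l IH]; simpl.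
  - intros [x [[] _]].
  - intros [y [hy hay]]. destruct (excluded_middle_informative (le a x)) as [h|h]; simpl.
    + left. auto.
    + right. split; [exact h|]. apply IH. destruct hy as [<-|hy]; [contradiction|]. eauto.
Qed.

Lemma good_trunc {I : Type} (le : I -> I -> Prop) a l : good le a l -> trunc le a l = l.
Proof.
  induction l as [|x l IH]; simpl; [tauto|].
  intros [[h1 h2]|[h1 h2]]; destruct (excluded_middle_informative (le a x)); subst; try tauto.
  f_equal. auto.
Qed.

Lemma good_hit {I : Type} (le : I -> I -> Prop) a l : good le a l -> exists x, In x l /\ le a x.
Proof.
  induction l as [|x l IH]; simpl; [tauto|].
  intros [[h1 h2]|[h1 h2]].
  - exists x. auto.
  - destruct (IH h2) as [y [h3 h4]]. exists y. auto.
Qed.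

Lemma trunc_trunc {I : Type} (le : I -> I -> Prop) (trans : forall a b c, le a b -> le b c -> le a c)
  a b l : le a b -> trunc le a (trunc le b l) = trunc le a l.
Proof.
  intros hab. induction l as [|x l IH]; simpl; [reflexivity|].
  destruct (excluded_middle_informative (le b x)) as [h|h]; simpl.
  - destruct (excluded_middle_informative (le a x)) as [h'|h']; [reflexivity|].
    exfalso. apply h'. eauto.
  - destruct (excluded_middle_informative (le a x)) as [h'|h']; [reflexivity|]. f_equal. exact IH.
Qed.

Lemma trunc_app {I : Type} (le : I -> I -> Prop) a l m : good le a l -> trunc le a (l ++ m) = l.
Proof.
  induction l as [|x l IH]; simpl; [tauto|].
  intros [[h1 h2]|[h1 h2]]; destruct (excluded_middle_informative (le a x)); subst; try tauto.
  f_equal. auto.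
Qed.

Lemma trunc_prefix {I : Type} (le : I -> I -> Prop) a l : exists r, l = trunc le a l ++ r.
Proof.
  induction l as [|x l IH]; simpl.
  - exists nil. reflexivity.
  - destruct (excluded_middle_informative (le a x)).
    + exists l. reflexivity.
    + destruct IH as [r hr]. exists r. simpl. f_equal. exact hr.
Qed.

Definition Zs {I : Type} (le : I -> I -> Prop) (a : I) := {l : list I | good le a l}.

Lemma fZ_good {I : Type} (le : I -> I -> Prop) (trans : forall a b c, le a b -> le b c -> le a c)
  a b (h : le a b) (l : Zs le b) : good le a (trunc le a (proj1_sig l)).
Proof.
  apply trunc_good. destruct (good_hit le b _ (proj2_sig l)) as [x [h1 h2]]. eauto.
Qed.

Definition fZ {I : Type} (le : I -> I -> Prop) (trans : forall a b c, le a b -> le b c -> le a c)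
  a b (h : le a b) (l : Zs le b) : Zs le a :=
  exist _ (trunc le a (proj1_sig l)) (fZ_good le trans a b h l).

Lemma Z_inv {I : Type} (le : I -> I -> Prop) trans : is_inverse_system le (Zs le) (fZ le trans).
Proof.
  split.
  - intros a h [l hl]. apply eq_sig_hprop. intros; apply proof_irrelevance. simpl. apply good_trunc, hl.
  - intros a b c hab hbc hac [l hl]. apply eq_sig_hprop. intros; apply proof_irrelevance. simpl.
    apply trunc_trunc; auto.
Qed.

Lemma Z_surj {I : Type} (le : I -> I -> Prop) (refl : forall a, le a a) trans :
  surjective_system le (Zs le) (fZ le trans).
Proof.
  intros a b h [l hl].
  assert (g : good le b (trunc le b (l ++ b :: nil))).
  { apply trunc_good. exists b. split; [apply in_or_app; simpl; auto| apply refl]. }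
  exists (exist _ _ g). apply eq_sig_hprop. intros; apply proof_irrelevance. simpl.
  rewrite trunc_trunc; auto. apply trunc_app. exact hl.
Qed.

Lemma Z_inh {I : Type} (le : I -> I -> Prop) (refl : forall a, le a a) a : inhabited (Zs le a).
Proof.
  constructor. exists (a :: nil). simpl. left. auto.
Qed.

Lemma good_last {I : Type} (le : I -> I -> Prop) a l d : good le a l ->
  exists m, m < length l /\ le a (nth m l d).
Proof.
  induction l as [|x l IH]; simpl; [tauto|].
  intros [[h1 h2]|[h1 h2]].
  - exists 0. split; [lia|exact h1].
  - destruct (IH h2) as [m [hm1 hm2]]. exists (S m). split; [lia|exact hm2].
Qed.

Lemma Z_lim_cof {I : Type} (le : I -> I -> Prop) (Hdir : directed_preorder le) (Hne : inhabited I) :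
  forall trans, inv_limit_nonempty le (Zs le) (fZ le trans) -> has_countable_cofinal_seq le.
Proof.
  destruct Hdir as [refl [trans0 dir]]. destruct Hne as [d].
  intros trans [x Hx].
  set (L := fun a => proj1_sig (x a)).
  assert (HL : forall a c (h : le a c), trunc le a (L c) = L a).
  { intros a c h. unfold L. rewrite <- (Hx a c h). reflexivity. }
  set (s := fun n => match excluded_middle_informative (exists a, n < length (L a)) with
                     | left e => nth n (L (proj1_sig (constructive_indefinite_description _ e))) d
                     | right _ => d end).
  exists s. intros a.
  destruct (good_last le a (L a) d (proj2_sig (x a))) as [m [hm1 hm2]].
  exists m. unfold s.
  destruct (excluded_middle_informative (exists a, m < length (L a))) as [e|e]; [|exfalso; eauto].
  destruct (constructive_indefinite_description _ e) as [b hb]. simpl.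
  destruct (dir a b) as [c [hac hbc]].
  destruct (trunc_prefix le a (L c)) as [r1 hr1].
  destruct (trunc_prefix le b (L c)) as [r2 hr2].
  rewrite (HL a c hac) in hr1. rewrite (HL b c hbc) in hr2.
  assert (E : nth m (L b) d = nth m (L a) d).
  { transitivity (nth m (L c) d).
    - rewrite hr2. rewrite app_nth1; auto.
    - rewrite hr1. rewrite app_nth1; auto. }
  rewrite E. exact hm2.
Qed.

Record Bij (A B : Type) := mkBij {
  bf : A -> B; bb : B -> A;
  bfb : forall x, bb (bf x) = x; bbf : forall y, bf (bb y) = y }.
Arguments mkBij {A B}. Arguments bf {A B}. Arguments bb {A B}.
Arguments bfb {A B}. Arguments bbf {A B}.

Definition bcomp {A B C} (g : Bij B C) (h : Bij A B) : Bij A C.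
Proof.
  refine (mkBij (fun x => bf g (bf h x)) (fun y => bb h (bb g y)) _ _).
  - intros x. rewrite bfb, bfb. reflexivity.
  - intros y. rewrite bbf, bbf. reflexivity.
Defined.

Definition binv {A B} (g : Bij A B) : Bij B A :=
  mkBij (bb g) (bf g) (bbf g) (bfb g).

Definition bid A : Bij A A := mkBij (fun x => x) (fun x => x) (fun _ => eq_refl) (fun _ => eq_refl).

Lemma bij_ext {A B} (g h : Bij A B) : (forall x, bf g x = bf h x) -> g = h.
Proof.
  intros E.
  assert (Ef : bf g = bf h) by (apply functional_extensionality; exact E).
  assert (Eb : bb g = bb h).
  { apply functional_extensionality. intros y.
    rewrite <- (bbf h y) at 1. rewrite <- E. apply bfb. }
  destruct g as [f1 b1 p1 q1], h as [f2 b2 p2 q2]. simpl in *. subst.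
  f_equal; apply proof_irrelevance.
Qed.

Definition consS {U} (u : U) (s : nat -> U) : nat -> U :=
  fun n => match n with 0 => u | S n => s n end.
Definition tlS {U} (s : nat -> U) : nat -> U := fun n => s (S n).

Definition HQ {U} (a0 : U) (P : U -> Prop) (s : nat -> U) : Prop :=
  exists n, (forall k, k < n -> s k = a0) /\ ~ P (s n).

Lemma HQ_cons {U} (a0 : U) (P : U -> Prop) (Pa0 : P a0) s : HQ a0 P (consS a0 s) <-> HQ a0 P s.
Proof.
  split.
  - intros [n [h1 h2]]. destruct n as [|n]; [simpl in h2; tauto|].
    exists n. split; [|exact h2]. intros k hk. apply (h1 (S k)). lia.
  - intros [n [h1 h2]]. exists (S n). split; [|exact h2].
    intros [|k] hk; simpl; [reflexivity|]. apply h1. lia.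
Qed.

Definition HF {U} (a0 : U) (P : U -> Prop) (s : nat -> U) : nat -> U :=
  if excluded_middle_informative (HQ a0 P s) then consS a0 s else s.
Definition HG {U} (a0 : U) (P : U -> Prop) (s : nat -> U) : nat -> U :=
  if excluded_middle_informative (HQ a0 P s) then tlS s else s.

Lemma HF_P {U} (a0 : U) (P : U -> Prop) (Pa0 : P a0) s : P (HF a0 P s 0).
Proof.
  unfold HF. destruct (excluded_middle_informative (HQ a0 P s)) as [h|h]; simpl; [exact Pa0|].
  apply NNPP. intros hn. apply h. exists 0. split; [intros; lia|exact hn].
Qed.

Definition hotel0 {U} (a0 : U) (P : U -> Prop) (Pa0 : P a0) : Bij (nat -> U) {t : nat -> U | P (t 0)}.
Proof.
  refine (mkBij (fun s => exist _ (HF a0 P s) (HF_P a0 P Pa0 s)) (fun t => HG a0 P (proj1_sig t)) _ _).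
  - intros s. simpl. unfold HF, HG.
    destruct (excluded_middle_informative (HQ a0 P s)) as [h|h].
    + destruct (excluded_middle_informative (HQ a0 P (consS a0 s))) as [h'|h'].
      * reflexivity.
      * exfalso. apply h'. apply HQ_cons; auto.
    + destruct (excluded_middle_informative (HQ a0 P s)); [contradiction|reflexivity].
  - intros [t ht]. apply eq_sig_hprop. intros; apply proof_irrelevance. simpl.
    unfold HF, HG.
    destruct (excluded_middle_informative (HQ a0 P t)) as [h|h].
    + assert (h2 : HQ a0 P (tlS t)).
      { destruct h as [n [h1 h2]]. destruct n as [|n]; [contradiction|].
        exists n. split; [|exact h2]. intros k hk. apply (h1 (S k)). lia. }
      destruct (excluded_middle_informative (HQ a0 P (tlS t))) as [_|h']; [|contradiction].
      apply functional_extensionality. intros [|n]; [|reflexivity].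
      simpl. destruct h as [n [h1 h3]]. destruct n as [|n]; [contradiction|]. symmetry. apply h1. lia.
    + destruct (excluded_middle_informative (HQ a0 P t)); [contradiction|reflexivity].
Defined.

Definition hotel1 {A U} (i : A -> U) (inj : forall x y, i x = i y -> x = y) :
  Bij (A * (nat -> U)) {t : nat -> U | exists a, i a = t 0}.
Proof.
  refine (mkBij (fun p => exist _ (consS (i (fst p)) (snd p)) (ex_intro _ (fst p) eq_refl))
                (fun t => (proj1_sig (constructive_indefinite_description _ (proj2_sig t)), tlS (proj1_sig t))) _ _).
  - intros [a s]. simpl.
    destruct (constructive_indefinite_description _ _) as [a' ha']. simpl. simpl in ha'.
    f_equal. apply inj. exact ha'.
  - intros [t ht]. apply eq_sig_hprop. intros; apply proof_irrelevance. simpl.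
    destruct (constructive_indefinite_description _ _) as [a' ha']. simpl.
    apply functional_extensionality. intros [|n]; simpl; [exact ha'|reflexivity].
Defined.

Definition hotel {A U} (i : A -> U) (inj : forall x y, i x = i y -> x = y) (a0 : A) :
  Bij (A * (nat -> U)) (nat -> U) :=
  bcomp (binv (hotel0 (i a0) (fun u => exists a, i a = u) (ex_intro _ a0 eq_refl))) (hotel1 i inj).

Definition fib {W T} (p : W -> T) (y : T) := {w : W | p w = y}.

Section dummy. End dummy.

Definition fwd {W T O} (p : W -> T) (e : forall x, Bij (fib p x) O) (w : W) : O :=
  bf (e (p w)) (exist _ w eq_refl).
Definition bwd {W T O} (p : W -> T) (e : forall x, Bij (fib p x) O) (x : T) (o : O) : W :=
  proj1_sig (bb (e x) o).

Lemma bwd_p {W T O} p e x o : p (@bwd W T O p e x o) = x.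
Proof. unfold bwd. exact (proj2_sig (bb (e x) o)). Qed.

Lemma bwd_fwd {W T O} p e w : @bwd W T O p e (p w) (fwd p e w) = w.
Proof. unfold bwd, fwd. rewrite bfb. reflexivity. Qed.

Lemma fwd_gen {W T O} (p : W -> T) (e : forall x, Bij (fib p x) O) w x1 x2 (E : x1 = x2)
  (h1 : p w = x1) (h2 : p w = x2) : bf (e x1) (exist _ w h1) = bf (e x2) (exist _ w h2).
Proof. subst. f_equal. f_equal. apply proof_irrelevance. Qed.

Lemma fwd_bwd {W T O} p e x o : fwd p e (@bwd W T O p e x o) = o.
Proof.
  unfold fwd.
  transitivity (bf (e x) (exist _ (bwd p e x o) (bwd_p p e x o))).
  { apply fwd_gen. apply bwd_p. }
  transitivity (bf (e x) (bb (e x) o)); [|apply bbf].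
  f_equal. apply eq_sig_hprop. intros; apply proof_irrelevance. reflexivity.
Qed.

Definition fibmap {W T1 T2 O} (p : W -> T1) (e : forall x, Bij (fib p x) O) (f : T1 -> T2) (y : T2) :
  Bij (fib (fun w => f (p w)) y) (fib f y * O).
Proof.
  refine (mkBij (fun w : fib (fun w => f (p w)) y =>
                   (exist (fun x => f x = y) (p (proj1_sig w)) (proj2_sig w), fwd p e (proj1_sig w)))
                (fun q : fib f y * O => exist (fun w => f (p w) = y) (bwd p e (proj1_sig (fst q)) (snd q))
                   (eq_trans (f_equal f (bwd_p p e _ _)) (proj2_sig (fst q)))) _ _).
  - intros [w hw]. apply eq_sig_hprop. intros; apply proof_irrelevance. simpl. apply bwd_fwd.
  - intros [[x hx] o]. simpl. f_equal.
    + apply eq_sig_hprop. intros; apply proof_irrelevance. simpl. apply bwd_p.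
    + apply fwd_bwd.
Defined.

Definition pick {A} (h : inhabited A) : A := epsilon h (fun _ => True).

Lemma Lmap {O T1 T2 U} (p : O -> T1) (H : forall x, inhabited (Bij (fib p x) (nat -> U)))
  (f : T1 -> T2) (y : T2) (a0 : fib f y) (i : fib f y -> U) (inj : forall x y, i x = i y -> x = y) :
  inhabited (Bij (fib (fun w => f (p w)) y) (nat -> U)).
Proof.
  constructor. exact (bcomp (hotel i inj a0) (fibmap p (fun x => pick (H x)) f y)).
Qed.

Lemma Lnonempty {T U} (i : T -> U) (inj : forall x y, i x = i y -> x = y) (t0 : T) :
  exists p : (nat -> U) -> T, forall y, inhabited (Bij (fib p y) (nat -> U)).
Proof.
  set (H := hotel i inj t0). clearbody H.
  exists (fun w => fst (bb H w)). intros y. constructor.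
  refine (mkBij (fun w : fib (fun w => fst (bb H w)) y => snd (bb H (proj1_sig w)))
    (fun o => exist (fun w => fst (bb H w) = y) (bf H (y, o)) (f_equal fst (bfb H (y, o)))) _ _).
  - intros [w hw]. apply eq_sig_hprop. intros; apply proof_irrelevance. simpl.
    rewrite <- hw. rewrite <- (surjective_pairing (bb H w)). apply bbf.
  - intros o. simpl. rewrite bfb. reflexivity.
Qed.

Lemma Ltrans {O T} (p q : O -> T) (Hp : forall x, inhabited (Bij (fib p x) O))
  (Hq : forall x, inhabited (Bij (fib q x) O)) :
  exists g : Bij O O, forall w, p (bb g w) = q w.
Proof.
  set (ep := fun x => pick (Hp x)). set (eqq := fun x => pick (Hq x)). clearbody ep eqq.
  unshelve eexists (mkBij (fun w => bwd q eqq (p w) (fwd p ep w)) (fun w => bwd p ep (q w) (fwd q eqq w)) _ _).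
  - intros w. cbv beta. rewrite fwd_bwd. rewrite (bwd_p q eqq). apply bwd_fwd.
  - intros w. cbv beta. rewrite fwd_bwd. rewrite (bwd_p p ep). apply bwd_fwd.
  - intros w. simpl. apply bwd_p.
Qed.

Definition SymG (O : Type) : Group.
Proof.
  refine {| gcar := Bij O O; gmul := bcomp; gone := bid O; ginv := binv |}.
  - intros. apply bij_ext. reflexivity.
  - intros. apply bij_ext. reflexivity.
  - intros. apply bij_ext. intros z. simpl. apply bfb.
Defined.

Lemma c5_c1 (I : Type) (le : I -> I -> Prop) (Hdir : directed_preorder le) (Hne : inhabited I) :
  cond5 le -> cond1 le.
Proof.
  intros H5. apply NNPP. intros Hn.
  pose proof Hdir as [refl [trans dir]].
  set (O := nat -> list I).
  set (Y := fun a => {p : O -> Zs le a | forall y, inhabited (Bij (fib p y) O)}).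
  assert (Hmap : forall a b (h : le a b) (p : O -> Zs le b), (forall y, inhabited (Bij (fib p y) O)) ->
     forall y, inhabited (Bij (fib (fun w => fZ le trans a b h (p w)) y) O)).
  { intros a b h p Hp y.
    destruct (Z_surj le refl trans a b h y) as [z hz].
    apply (Lmap p Hp (fZ le trans a b h) y (exist _ z hz) (fun w => proj1_sig (proj1_sig w))).
    intros [[u1 g1] e1] [[u2 g2] e2] E. simpl in E. subst u2.
    assert (g1 = g2) by apply proof_irrelevance. subst g2.
    assert (e1 = e2) by apply proof_irrelevance. subst e2. reflexivity. }
  assert (Hact : forall a (g : SymG O) (p : Y a) y,
     inhabited (Bij (fib (fun w => proj1_sig p (bb g w)) y) O)).
  { intros a g [p Hp] y. simpl. destruct (Hp y) as [e]. constructor.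
    refine (bcomp e (mkBij (fun w : fib (fun w => p (bb g w)) y => exist (fun w => p w = y) (bb g (proj1_sig w)) (proj2_sig w))
       (fun w : fib p y => exist (fun w => p (bb g w) = y) (bf g (proj1_sig w))
           (eq_trans (f_equal p (bfb g _)) (proj2_sig w))) _ _)).
    - intros [w hw]. apply eq_sig_hprop. intros; apply proof_irrelevance. simpl. apply bbf.
    - intros [w hw]. apply eq_sig_hprop. intros; apply proof_irrelevance. simpl. apply bfb. }
  set (fY := fun a b h (p : Y b) =>
     exist (fun p => forall y, inhabited (Bij (fib p y) O))
       (fun w => fZ le trans a b h (proj1_sig p w)) (Hmap a b h _ (proj2_sig p)) : Y a).
  set (act := fun a (g : SymG O) (p : Y a) =>
     exist (fun p => forall y, inhabited (Bij (fib p y) O))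
       (fun w => proj1_sig p (bb g w)) (Hact a g p) : Y a).
  assert (Yinh : forall a, inhabited (Y a)).
  { intros a. destruct (Z_inh le refl a) as [t0].
    destruct (Lnonempty (fun z : Zs le a => proj1_sig z) (fun x y E => eq_sig_hprop (fun _ _ _ => proof_irrelevance _ _ _) x y E) t0)
      as [p Hp].
    exact (inhabits (exist _ p Hp)). }
  assert (Ytr : forall a (p q : Y a), exists g : SymG O, act a g p = q).
  { intros a [p Hp] [q Hq]. destruct (Ltrans p q Hp Hq) as [g Hg]. exists g.
    apply eq_sig_hprop. intros; apply proof_irrelevance. simpl.
    apply functional_extensionality. exact Hg. }
  destruct (Z_inv le trans) as [Zi1 Zi2].
  destruct (H5 (SymG O) Y fY act) as [x Hx].
  - split.
    + intros a h [p Hp]. apply eq_sig_hprop. intros; apply proof_irrelevance. simpl.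
      apply functional_extensionality. intros w. apply Zi1.
    + intros a b c hab hbc hac [p Hp]. apply eq_sig_hprop. intros; apply proof_irrelevance. simpl.
      apply functional_extensionality. intros w. apply Zi2.
  - intros a b h q. destruct (Yinh b) as [p0].
    destruct (Ytr a (fY a b h p0) q) as [g Hg].
    exists (act b g p0). rewrite <- Hg. apply eq_sig_hprop. intros; apply proof_irrelevance. reflexivity.
  - exact Yinh.
  - intros a. split.
    + intros [p Hp]. apply eq_sig_hprop. intros; apply proof_irrelevance. reflexivity.
    + intros g h [p Hp]. apply eq_sig_hprop. intros; apply proof_irrelevance. reflexivity.
  - intros a p q. apply Ytr.
  - intros a b h g [p Hp]. apply eq_sig_hprop. intros; apply proof_irrelevance. reflexivity.
  - apply Hn. right. apply (Z_lim_cof le Hdir Hne trans).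
    exists (fun a => proj1_sig (x a) (fun _ => nil)).
    intros a b h. rewrite <- (Hx a b h). reflexivity.
Qed.

Theorem theorem1 (I : Type) (le : I -> I -> Prop)
  (Hdir : directed_preorder le) (Hne : inhabited I) :
  (cond1 le <-> cond2 le) /\ (cond1 le <-> cond3 le) /\
  (cond1 le <-> cond4 le) /\ (cond1 le <-> cond5 le).
Proof.
  pose proof (c1_c2 I le Hdir) as A12.
  pose proof (c5_c1 I le Hdir Hne) as A51.
  pose proof (c2_c5 I le) as A25.
  pose proof (c2_c3 I le) as A23.
  pose proof (c3_c2 I le) as A32.
  pose proof (c2_c4 I le Hdir) as A24.
  pose proof (c4_c2 I le Hdir) as A42.
  repeat split; tauto.
Qed.
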